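(* For every graph $G$ and every integer $\ell\ge 0$, a set $B\subseteq V(G)$ is an $\ell$-leaky forcing set of $G$ if and only if it is a mixed $\ell$-leaky forcing set of $G$. In particular $\operatorname{Z}_{(\ell)}(G)=\operatorname{Z}^m_{(\ell)}(G)$.
   Context: All graphs are finite, simple and undirected. Zero forcing: a blue vertex $u$ with exactly one white neighbor $w$ may force $w$ (color it blue), written $u\to w$. A vertex leak is a vertex not allowed to perform any force; an edge leak is an edge $xy$ across which no force may be performed (neither $x\to y$ nor $y\to x$); a specified leak is an ordered pair $x\to y$ meaning $x$ may not force $y$. $B$ is an $\ell$-leaky forcing set if for every set of at most $\ell$ vertex leaks, exhaustively applying the forcing rule from initial blue set $B$ colors all of $V(G)$ blue; $B$ is a mixed $\ell$-leaky forcing set if the same holds for every set of at most $\ell$ leaks of any mix of the three kinds. $\operatorname{Z}_{(\ell)}(G)$ and $\operatorname{Z}^m_{(\ell)}(G)$ are the minimum sizes of an $\ell$-leaky forcing set and a mixed $\ell$-leaky forcing set, respectively. *)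

(* Defs.v *)
From mathcomp Require Import all_boot.
Set Implicit Arguments. Unset Strict Implicit. Unset Printing Implicit Defensive.

Section LeakyForcing.
Variable T : finType.
(* a graph on vertex set T: e is its (symmetric, irreflexive) adjacency relation *)
Variable e : rel T.

(* One round of the forcing rule, where [A u w] says whether the force u -> w
   is permitted: every white w that some blue u with exactly one white
   neighbour w is permitted to force becomes blue. *)
Definition force_step (A : rel T) (S : {set T}) : {set T} :=
  S :|: [set w | [exists u in S,
           [&& e u w, w \notin S, A u w &
               [forall v, (e u v && (v != w)) ==> (v \in S)]]]].

(* result of exhaustively applying the forcing rule from B
   (after #|T| rounds nothing can change any more) *)
Definition closure (A : rel T) (B : {set T}) : {set T} :=
  iter #|T| (force_step A) B.

Definition forces_all (A : rel T) (B : {set T}) : bool :=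
  closure A B == setT.

Definition vleak_allowed (L : {set T}) : rel T := fun u _ => u \notin L.

Definition leaky_forcing_set (l : nat) (B : {set T}) : bool :=
  [forall L : {set T}, (#|L| <= l) ==> forces_all (vleak_allowed L) B].

(* ---- mixed leaks ----
   inl (inl v)      : vertex leak at v
   inl (inr (x,y))  : edge leak on edge xy
   inr (x,y)        : specified leak x -> y  (xy an edge) *)
Definition leak := ((T + (T * T)) + (T * T))%type.

Definition valid_leak (x : leak) : bool :=
  match x with
  | inl (inl _) => true
  | inl (inr (a, b)) => e a b
  | inr (a, b) => e a b
  end.

Definition forbids (x : leak) (u w : T) : bool :=
  match x with
  | inl (inl v) => u == v
  | inl (inr (a, b)) => ((u == a) && (w == b)) || ((u == b) && (w == a))
  | inr (a, b) => (u == a) && (w == b)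
  end.

Definition mixed_allowed (L : {set leak}) : rel T :=
  fun u w => [forall x in L, ~~ forbids x u w].

Definition mixed_leaky_forcing_set (l : nat) (B : {set T}) : bool :=
  [forall L : {set leak},
     [&& #|L| <= l & [forall x in L, valid_leak x]] ==>
       forces_all (mixed_allowed L) B].

(* minimum sizes; setT is always such a set, so #|T| is a valid default *)
Definition Zleak (l : nat) : nat :=
  \big[minn/#|T|]_(B : {set T} | leaky_forcing_set l B) #|B|.

Definition Zmixed (l : nat) : nat :=
  \big[minn/#|T|]_(B : {set T} | mixed_leaky_forcing_set l B) #|B|.

End LeakyForcing.

(* Main.v *)
Require Import Defs.
From mathcomp Require Import all_boot.

Section Aux.
Variable T : finType.
Variable e : rel T.

Lemma sub_step (A : rel T) (S : {set T}) : S \subset force_step e A S.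
Proof. by rewrite /force_step subsetUl. Qed.

Lemma closure_sub (A : rel T) (B : {set T}) : B \subset Defs.closure e A B.
Proof.
rewrite /Defs.closure; elim: #|T| => //= n IH.
exact: subset_trans IH (sub_step _ _).
Qed.

Lemma closure_fix (A : rel T) (B : {set T}) :
  force_step e A (Defs.closure e A B) = Defs.closure e A B.
Proof.
set f := force_step e A.
have Q : forall i, i <= #|iter i f B| \/ f (iter i f B) = iter i f B.
  elim=> [|i [IH|IH]]; first by left.
  - case: (boolP (f (iter i f B) == iter i f B)) => [/eqP h|h].
      by right; rewrite /= h h.
    left; rewrite /=.
    have pr : iter i f B \proper f (iter i f B).
      by rewrite properEneq eq_sym h sub_step.
    exact: leq_ltn_trans IH (proper_card pr).
  - by right; rewrite /= IH IH.
rewrite /Defs.closure -/f.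
case: (Q #|T|) => [h|h]; last by [].
have -> : iter #|T| f B = setT.
  apply/eqP; rewrite eqEcard subsetT cardsT; exact: h.
apply/eqP; rewrite eqEsubset subsetT; exact: sub_step.
Qed.

Lemma key (A A' : rel T) (B C : {set T}) :
  force_step e A C = C -> B \subset C ->
  (forall u w, u \in C -> w \notin C -> A' u w -> A u w) ->
  Defs.closure e A' B \subset C.
Proof.
move=> fixC BC H; rewrite /Defs.closure; elim: #|T| => //= n IH.
apply/subsetP => w; rewrite /force_step in_setU => /orP [/(subsetP IH)//|].
rewrite inE => /existsP [u /andP [uS /and4P [euw wS A'uw all]]].
apply/idPn => wC.
have uC := subsetP IH u uS.
have : w \in force_step e A C; last by rewrite fixC (negbTE wC).
rewrite /force_step in_setU (negbTE wC) /= inE.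
apply/existsP; exists u.
rewrite uC euw wC (H u w uC) //=.
apply/forallP => v; apply/implyP => hv.
have := forallP all v; rewrite hv /= => /(subsetP IH); exact.
Qed.

End Aux.

Theorem corollary4p3 (T : finType) (e : rel T)
  (e_sym : symmetric e) (e_irr : irreflexive e) (l : nat) :
  (forall B : {set T},
      leaky_forcing_set e l B <-> mixed_leaky_forcing_set e l B)
  /\ Zleak e l = Zmixed e l.
Proof.
have iff : forall B : {set T},
      leaky_forcing_set e l B <-> mixed_leaky_forcing_set e l B.
  move=> B; split.
  - move=> /forallP HL; apply/forallP => L; apply/implyP => /andP [cL _].
    set C := Defs.closure e (mixed_allowed L) B.
    pose g (x : leak T) : T := match x with
      | inl (inl v) => v
      | inl (inr (a, b)) => if a \in C then a else b
      | inr (a, b) => a end.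
    have := HL (g @: L); rewrite (leq_trans (leq_imset_card _ _) cL) /=.
    rewrite /forces_all => /eqP hT.
    rewrite /forces_all eqEsubset subsetT /= -hT.
    apply: key; [exact: closure_fix | exact: closure_sub |].
    move=> u w uC wC; rewrite /vleak_allowed => ugL.
    apply/forallP => x; apply/implyP => xL.
    have gx : g x != u.
      by apply: contraNneq ugL => <-; apply: imset_f.
    move: gx; case: x xL => [[v|[a b]]|[a b]] xL /=.
    + by rewrite eq_sym.
    + case: ifP => aC gx.
        by rewrite eq_sym (negbTE gx) /=; apply/negP => /andP [_ /eqP wa];
           move: wC; rewrite wa aC.
      apply/negP => /orP [/andP [/eqP ua _]|/andP [/eqP ub _]];
        last by move: gx; rewrite ub eqxx.
      by move: aC; rewrite -ua uC.
    + by move=> gx; rewrite eq_sym (negbTE gx).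
  - move=> /forallP HM; apply/forallP => L; apply/implyP => cL.
    pose M : {set leak T} := [set inl (inl v) | v in L].
    have := HM M.
    have cM : #|M| <= l.
      rewrite card_imset //; by move=> x y [].
    have vM : [forall x in M, valid_leak e x].
      by apply/forallP => x; apply/implyP => /imsetP [v _ ->].
    rewrite cM vM /= /forces_all => /eqP hT.
    rewrite eqEsubset subsetT /= -hT.
    apply: key; [exact: closure_fix | exact: closure_sub |].
    move=> u w _ _ /forallP hA; rewrite /vleak_allowed.
    apply/negP => uL.
    have := hA (inl (inl u)); rewrite imset_f //= eqxx //.
split; first exact: iff.
rewrite /Zleak /Zmixed; apply: eq_bigl => B.
by apply/idP/idP => /iff.
Qed.
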